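(* Let $m,n,k$ be positive integers with $(m,k-1)=1$ and $n=\mathrm{ind}_m(k)$, let $G=G(m,n,k)=\langle a,b;\ a^m=1,\ b^n=1,\ b^{-1}ab=a^k\rangle$, and let $x,y\in\mathbb{Z}_m$. Then $|C(x,y)|=\dfrac{m}{(m,y)}$.
   Context: $\mathrm{ind}_m(k)$ is the least positive integer $d$ with $k^d\equiv1\pmod m$; $k_t=k^t-1\pmod m$. Elements of $G$ are written uniquely as $a^ib^j$, $i\in\mathbb{Z}_m$, $j\in\mathbb{Z}_n$. For $x,y\in\mathbb{Z}_m$, $\mu(x,y):G\to G$ is $(a^ib^j)\mu(x,y)=a^{xik^j-yk_j}$, and $C(x,y)=\{\mu(x,yz):z\in\mathbb{Z}_m\}$ is a set of maps $G\to G$; $(m,y)$ denotes the gcd of $m$ and (a representative of) $y$. *)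

(* Defs.v *)
From mathcomp Require Import all_boot.
Set Implicit Arguments. Unset Strict Implicit. Unset Printing Implicit Defensive.

Definition is_ind (m k n : nat) : Prop :=
  [/\ 0 < n, k ^ n = 1 %[mod m] & forall d, 0 < d < n -> k ^ d <> 1 %[mod m]].

(* Elements a^i b^j of G(m,n,k) are represented by their unique normal-form
   exponents (i, j) in Z_m x Z_n. *)
Definition Gelt (m n : nat) := ('I_m * 'I_n)%type.

(* residue of v in Z_m, given a witness i : 'I_m (so that m > 0) *)
Definition mod_of (m : nat) (i : 'I_m) (v : nat) : 'I_m :=
  Ordinal (ltn_pmod v (leq_ltn_trans (leq0n i) (ltn_ord i))).

Definition zero_of (n : nat) (j : 'I_n) : 'I_n :=
  Ordinal (leq_ltn_trans (leq0n j) (ltn_ord j)).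

(* (a^i b^j) mu(x,y) = a^(x i k^j - y k_j),  k_j = k^j - 1 (mod m).
   The subtraction is done mod m as  (A + (m - (B mod m))) mod m. *)
Definition mu_fun (m n k x y : nat) (g : Gelt m n) : Gelt m n :=
  let: (i, j) := g in
  (mod_of i (x * i * k ^ j + (m - (y * (k ^ j - 1)) %% m)), zero_of j).
Arguments mu_fun : clear implicits.

Definition mu (m n k x y : nat) : {ffun Gelt m n -> Gelt m n} :=
  [ffun g => mu_fun m n k x y g].

Definition Cset (m n k : nat) (x y : 'I_m) : {set {ffun Gelt m n -> Gelt m n}} :=
  [set mu m n k x (y * z) | z : 'I_m].
Arguments mu : clear implicits.
Arguments Cset : clear implicits.

(* Main.v *)
Require Import Defs.
From mathcomp Require Import all_boot.

Lemma mod_cancel m c a b : coprime m c -> a * c = b * c %[mod m] -> a = b %[mod m].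
Proof.
move=> cop.
wlog le: a b / b <= a.
  move=> H; case: (leqP b a) => [|/ltnW] h; first exact: H.
  by move=> e; symmetry; apply: H => //.
move/eqP; rewrite eqn_mod_dvd ?leq_mul2r ?le ?orbT // -mulnBl Gauss_dvdl //.
by rewrite -eqn_mod_dvd // => /eqP.
Qed.

Lemma cop_div m y : 0 < m -> coprime (m %/ gcdn m y) (y %/ gcdn m y).
Proof.
move=> m0; have g0 : 0 < gcdn m y by rewrite gcdn_gt0 m0.
rewrite /coprime -(eqn_pmul2r g0) mul1n muln_gcdl !divnK ?dvdn_gcdl ?dvdn_gcdr //.
Qed.

Lemma inj_mult m y z1 z2 : 0 < m -> z1 < m %/ gcdn m y -> z2 < m %/ gcdn m y ->
  y * z1 = y * z2 %[mod m] -> z1 = z2.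
Proof.
move=> m0.
wlog le: z1 z2 / z2 <= z1.
  move=> H h1 h2; case: (leqP z2 z1) => [|/ltnW] h; first exact: H.
  by move=> e; symmetry; apply: H => //.
move=> h1 h2 /eqP; rewrite eqn_mod_dvd ?leq_mul2l ?le ?orbT // -mulnBr.
have g0 : 0 < gcdn m y by rewrite gcdn_gt0 m0.
have -> : y * (z1 - z2) = (y %/ gcdn m y * (z1 - z2)) * gcdn m y.
  by rewrite mulnAC divnK ?dvdn_gcdr.
rewrite -{1}(divnK (dvdn_gcdl m y)) dvdn_pmul2r // Gauss_dvdr ?cop_div //.
move=> d; apply/eqP; rewrite eqn_leq le andbT -subn_eq0; apply/eqP.
case: (posnP (z1 - z2)) => // p; move: (dvdn_leq p d) => l.
have : z1 - z2 < m %/ gcdn m y by apply: leq_ltn_trans (leq_subr _ _) h1.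
by rewrite ltnNge l.
Qed.

Lemma red_mult m y z : 0 < m -> y * z = y * (z %% (m %/ gcdn m y)) %[mod m].
Proof.
move=> m0.
have e : y * (m %/ gcdn m y) = y %/ gcdn m y * m.
  by rewrite [RHS]mulnC muln_divCA_gcd.
rewrite {1}(divn_eq z (m %/ gcdn m y)) mulnDr mulnCA e mulnA modnMDl.
by [].
Qed.

From mathcomp Require Import zify.

Lemma muE m n k x a b : 0 < m -> 0 < n -> 0 < k -> coprime m (k - 1) -> is_ind m k n ->
  (mu m n k x a = mu m n k x b) <-> a = b %[mod m].
Proof.
move=> m0 n0 k0 cop [_ kn _]; split; last first.
  move=> e; apply/ffunP => -[i j]; rewrite !ffunE /=; congr pair; apply: val_inj => /=.
  by rewrite -modnMml e modnMml.
move=> E.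
case: (ltngtP m 1) => [|m1|m1]; first by rewrite ltnS leqn0 => /eqP m00; rewrite m00 in m0.
  have n1 : 1 < n.
    case: (ltngtP n 1) => // [|n1]; first by rewrite ltnS leqn0 => /eqP n00; rewrite n00 in n0.
    exfalso; rewrite n1 expn1 in kn.
    have d : m %| k - 1 by rewrite -(eqn_mod_dvd _ k0); apply/eqP; rewrite kn.
    move: cop; rewrite /coprime (gcdn_idPl d) => /eqP m1'; by rewrite m1' in m1.
  pose i0 : 'I_m := Ordinal m0; pose j1 : 'I_n := Ordinal n1.
  have := congr1 (fun f : {ffun Gelt m n -> Gelt m n} => nat_of_ord (f (i0, j1)).1) E; rewrite !ffunE /= muln0 expn1 mul0n add0n.
  move=> h.
  have hu : a * (k - 1) %% m < m by apply: ltn_pmod.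
  have hv : b * (k - 1) %% m < m by apply: ltn_pmod.
  have : a * (k - 1) %% m = b * (k - 1) %% m.
    move: h hu hv; set u := a * (k - 1) %% m; set v := b * (k - 1) %% m.
    move=> h hu hv; clearbody u v.
    have F w : w < m -> (m - w) %% m = if w == 0 then 0 else m - w.
      case: w => [|w] hw; first by rewrite subn0 modnn.
      by rewrite modn_small //; lia.
    move: h; rewrite /= !F //; case: eqP; case: eqP; lia.
  by apply: mod_cancel.
by rewrite m1 !modn1.
Qed.

Theorem corollary3p7 (m n k : nat) :
  0 < m -> 0 < n -> 0 < k ->
  coprime m (k - 1) ->
  is_ind m k n ->
  forall x y : 'I_m, #|Cset m n k x y| = m %/ gcdn m y.
Proof.
move=> m0 n0 k0 cop ind x y.
set m' := m %/ gcdn m y.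
have g0 : 0 < gcdn m y by rewrite gcdn_gt0 m0.
have m'0 : 0 < m' by rewrite divn_gt0 // dvdn_leq // dvdn_gcdl.
have m'm : m' <= m by rewrite leq_div.
pose f (z : 'I_m') := mu m n k x (y * z).
have -> : Cset m n k x y = [set f z | z : 'I_m'].
  apply/setP => F; apply/imsetP/imsetP => -[z _ ->].
    exists (Ordinal (ltn_pmod z m'0)) => //; rewrite /f /=.
    by apply/muE => //; apply: red_mult.
  exists (Ordinal (leq_trans (ltn_ord z) m'm)) => //.
rewrite card_imset ?card_ord // => z1 z2 E; apply: val_inj.
have h := proj1 (@muE m n k x (y * z1) (y * z2) m0 n0 k0 cop ind) E.
by move: h; apply: (@inj_mult m y z1 z2 m0 (ltn_ord z1) (ltn_ord z2)).
Qed.
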